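(* Consider a solution as in the setting, defined for $R\in(R_0,\infty)$ (the full areal-coordinate covering of the maximal Cauchy development), and let $R_i\in(R_0,\infty)$. (1) If $\mathcal{E}(R_i)=0$ then $\mathcal{E}(R)=0$ for all $R\in(R_0,\infty)$. (2) If $\mathcal{E}(R_i)\neq 0$ then $\mathcal{E}(R)$ is nonincreasing in $R$ on $(R_0,\infty)$. (3) If $\mathcal{E}(R_i)\neq0$ and $K\neq0$ then $\mathcal{E}(R)$ is strictly decreasing in $R$ on $(R_0,\infty)$.
   Context: Setting. A smooth vacuum $T^2$ symmetric spacetime on $T^3\times I$ in areal coordinates $(\theta,x,y,R)$, $\theta\in S^1=\mathbb{R}/\mathbb{Z}$, with metric $g=e^{2(\nu-U)}(-\alpha\,dR^2+d\theta^2)+e^{2U}[dx+A\,dy+(G+AH)\,d\theta]^2+e^{-2U}R^2(dy+H\,d\theta)^2$, where $\alpha>0,\nu,U,A,G,H$ are smooth functions of $(\theta,R)$ only, periodic in $\theta$. The Killing fields $\partial_x,\partial_y$ are chosen so that the twist $\epsilon_{abcd}X^aY^b\nabla^cX^d$ vanishes ($X=\partial_x,Y=\partial_y$), and $K\ge0$ denotes the constant twist $\epsilon_{abcd}Y^aX^b\nabla^cY^d$. Set $\beta=\nu+\tfrac12\ln\alpha$. The vacuum equations are: $\beta_R=\sqrt{\alpha}Rh-\frac{e^{2\beta}K^2}{4R^3}$, $\beta_\theta=2R\big(U_RU_\theta+\frac{e^{4U}}{4R^2}A_RA_\theta\big)$, $\alpha_R=-\frac{\alpha e^{2\beta}K^2}{R^3}$,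 $U_{RR}-\alpha U_{\theta\theta}=-\frac{U_R}{R}+\frac{\alpha_RU_R}{2\alpha}+\frac{\alpha_\theta U_\theta}{2}+\frac{e^{4U}}{2R^2}(A_R^2-\alpha A_\theta^2)$, $A_{RR}-\alpha A_{\theta\theta}=\frac{A_R}{R}+\frac{\alpha_RA_R}{2\alpha}+\frac{\alpha_\theta A_\theta}{2}-4A_RU_R+4\alpha A_\theta U_\theta$, $G_R=-AH_R$, $H_R=\frac{e^{2\beta}K}{\sqrt{\alpha}R^3}$, with $h=\frac{U_R^2}{\sqrt\alpha}+\sqrt\alpha\,U_\theta^2+\frac{e^{4U}}{4R^2}\Big(\frac{A_R^2}{\sqrt\alpha}+\sqrt\alpha\,A_\theta^2\Big)$ and $\mathcal{E}(R)=\int_{S^1}h\,d\theta$. Solutions are uniquely determined by data at one time $R_i$. The maximal Cauchy development of such data is covered by these coordinates with $R\in(R_0,\infty)$ for some $R_0\ge0$. *)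

(* Defs.v *)
From Stdlib Require Import Reals List.
From Coquelicot Require Import Coquelicot.
Open Scope R_scope.

(* Functions of (theta, R): first argument theta, second argument R. *)

Definition pth (f : R -> R -> R) : R -> R -> R :=
  fun th r => Derive (fun t => f t r) th.
Definition pR (f : R -> R -> R) : R -> R -> R :=
  fun th r => Derive (fun s => f th s) r.

Fixpoint pd (l : list bool) (f : R -> R -> R) : R -> R -> R :=
  match l with
  | nil => f
  | b :: l' => if b then pth (pd l' f) else pR (pd l' f)
  end.

Definition smooth_on (R0 : R) (f : R -> R -> R) : Prop :=
  forall (l : list bool) (th r : R), R0 < r ->
    ex_derive (fun t => pd l f t r) th /\
    ex_derive (fun s => pd l f th s) r /\
    continuous (fun p : R * R => pd l f (fst p) (snd p)) (th, r).

(* periodic in theta with period 1 (theta in R/Z) *)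
Definition periodic1 (f : R -> R -> R) : Prop :=
  forall th r, f (th + 1) r = f th r.

Definition beta (nu alpha : R -> R -> R) : R -> R -> R :=
  fun th r => nu th r + / 2 * ln (alpha th r).

Definition hdens (alpha U A : R -> R -> R) (th r : R) : R :=
  (pR U th r) ^ 2 / sqrt (alpha th r) + sqrt (alpha th r) * (pth U th r) ^ 2
  + exp (4 * U th r) / (4 * r ^ 2) *
    ((pR A th r) ^ 2 / sqrt (alpha th r) + sqrt (alpha th r) * (pth A th r) ^ 2).

Definition energy (alpha U A : R -> R -> R) (r : R) : R :=
  RInt (fun th => hdens alpha U A th r) 0 1.

(* smooth vacuum T^2-symmetric solution in areal coordinates on
   S^1 x (R0, oo), with constant twist K *)
Definition T2_vacuum (R0 K : R) (alpha nu U A G H : R -> R -> R) : Prop :=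
  let b := beta nu alpha in
  (forall f, In f (alpha :: nu :: U :: A :: G :: H :: nil) ->
     smooth_on R0 f /\ periodic1 f) /\
  (forall th r, R0 < r -> 0 < alpha th r) /\
  (forall th r, R0 < r ->
     pR b th r = sqrt (alpha th r) * r * hdens alpha U A th r
                 - exp (2 * b th r) * K ^ 2 / (4 * r ^ 3)) /\
  (forall th r, R0 < r ->
     pth b th r = 2 * r * (pR U th r * pth U th r
                 + exp (4 * U th r) / (4 * r ^ 2) * pR A th r * pth A th r)) /\
  (forall th r, R0 < r ->
     pR alpha th r = - (alpha th r * exp (2 * b th r) * K ^ 2 / r ^ 3)) /\
  (forall th r, R0 < r ->
     pR (pR U) th r - alpha th r * pth (pth U) th r =
       - (pR U th r / r) + pR alpha th r * pR U th r / (2 * alpha th r)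
       + pth alpha th r * pth U th r / 2
       + exp (4 * U th r) / (2 * r ^ 2) *
           ((pR A th r) ^ 2 - alpha th r * (pth A th r) ^ 2)) /\
  (forall th r, R0 < r ->
     pR (pR A) th r - alpha th r * pth (pth A) th r =
       pR A th r / r + pR alpha th r * pR A th r / (2 * alpha th r)
       + pth alpha th r * pth A th r / 2
       - 4 * pR A th r * pR U th r
       + 4 * alpha th r * pth A th r * pth U th r) /\
  (forall th r, R0 < r -> pR G th r = - (A th r * pR H th r)) /\
  (forall th r, R0 < r ->
     pR H th r = exp (2 * b th r) * K / (sqrt (alpha th r) * r ^ 3)).

(* Main.v *)
Require Import Defs.
From Stdlib Require Import Reals Lra List.
From Coquelicot Require Import Coquelicot.
Open Scope R_scope.
Lemma c2_1d_fst (f : R -> R -> R) x y :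
  continuity_2d_pt f x y -> continuous (fun t => f t y) x.
Proof.
  intros H. apply filterlim_locally. intros eps.
  destruct (H eps) as [d Hd]. exists d. intros t Ht.
  apply Hd. apply Ht. rewrite Rminus_diag, Rabs_R0. apply cond_pos.
Qed.
Lemma c2_1d_snd (f : R -> R -> R) x y :
  continuity_2d_pt f x y -> continuous (fun t => f x t) y.
Proof.
  intros H. apply filterlim_locally. intros eps.
  destruct (H eps) as [d Hd]. exists d. intros t Ht.
  apply Hd. rewrite Rminus_diag, Rabs_R0. apply cond_pos. apply Ht.
Qed.
Lemma sm_c2 R0 f : smooth_on R0 f -> forall l th r, R0 < r -> continuity_2d_pt (pd l f) th r.
Proof.
  intros H l th r Hr. apply continuity_2d_pt_filterlim. apply (H l th r Hr).
Qed.
Lemma c2_swap (f : R -> R -> R) x y :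
  continuity_2d_pt f x y -> continuity_2d_pt (fun u v => f v u) y x.
Proof.
  intros H eps. destruct (H eps) as [d Hd]. exists d. intros u v Hu Hv. apply Hd; auto.
Qed.
Lemma c2_pow (f : R -> R -> R) n x y :
  continuity_2d_pt f x y -> continuity_2d_pt (fun u v => f u v ^ n) x y.
Proof.
  intros H. apply (continuity_1d_2d_pt_comp (fun z => z ^ n)); auto.
  apply derivable_continuous_pt. apply derivable_pt_pow.
Qed.

Lemma c2_exp (f : R -> R -> R) x y :
  continuity_2d_pt f x y -> continuity_2d_pt (fun u v => exp (f u v)) x y.
Proof.
  intros H. apply (continuity_1d_2d_pt_comp exp); auto.
  apply derivable_continuous_pt. apply derivable_pt_exp.
Qed.

Lemma c2_sqrt (f : R -> R -> R) x y :
  0 < f x y -> continuity_2d_pt f x y -> continuity_2d_pt (fun u v => sqrt (f u v)) x y.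
Proof.
  intros Hp H. apply (continuity_1d_2d_pt_comp sqrt); auto.
  apply continuity_pt_sqrt. lra.
Qed.

Lemma c2_div (f g : R -> R -> R) x y :
  continuity_2d_pt f x y -> continuity_2d_pt g x y -> g x y <> 0 ->
  continuity_2d_pt (fun u v => f u v / g u v) x y.
Proof.
  intros Hf Hg Hn. unfold Rdiv. apply continuity_2d_pt_mult; auto.
  apply continuity_2d_pt_inv; auto.
Qed.

Lemma hd_is_derive (u1 u2 al uu v1 v2 : R -> R) (r d1 d2 dal du dv1 dv2 : R) :
  0 < al r -> 0 < r ->
  is_derive u1 r d1 -> is_derive u2 r d2 -> is_derive al r dal ->
  is_derive uu r du -> is_derive v1 r dv1 -> is_derive v2 r dv2 ->
  is_derive (fun s => u1 s ^ 2 / sqrt (al s) + sqrt (al s) * u2 s ^ 2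
     + exp (4 * uu s) / (4 * s ^ 2) * (v1 s ^ 2 / sqrt (al s) + sqrt (al s) * v2 s ^ 2)) r
   (let sa := sqrt (al r) in let saR := dal / (2 * sa) in let e := exp (4 * uu r) in
    2*u1 r*d1/sa - u1 r^2*saR/sa^2 + saR*u2 r^2 + 2*sa*u2 r*d2
   + (4*du*e/(4*r^2) - e*(8*r)/(4*r^2)^2) * (v1 r^2/sa + sa*v2 r^2)
   + e/(4*r^2) * (2*v1 r*dv1/sa - v1 r^2*saR/sa^2 + saR*v2 r^2 + 2*sa*v2 r*dv2)).
Proof.
  intros Hal Hr H1 H2 H3 H4 H5 H6.
  assert (0 < sqrt (al r)) by (apply sqrt_lt_R0; lra).
  auto_derive.
  all: try (repeat split; try (eexists; eassumption); try lra; try nra; fail).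
  - replace (Derive (fun x => u1 x) r) with d1 by (symmetry; apply is_derive_unique; exact H1).
    replace (Derive (fun x => u2 x) r) with d2 by (symmetry; apply is_derive_unique; exact H2).
    replace (Derive (fun x => al x) r) with dal by (symmetry; apply is_derive_unique; exact H3).
    replace (Derive (fun x => uu x) r) with du by (symmetry; apply is_derive_unique; exact H4).
    replace (Derive (fun x => v1 x) r) with dv1 by (symmetry; apply is_derive_unique; exact H5).
    replace (Derive (fun x => v2 x) r) with dv2 by (symmetry; apply is_derive_unique; exact H6).
    simpl. field. lra.
Qed.

Lemma F_is_derive (u1 u2 al uu v1 v2 : R -> R) (r th d1 d2 dal du dv1 dv2 : R) :
  0 < al th -> 0 < r ->
  is_derive u1 th d1 -> is_derive u2 th d2 -> is_derive al th dal ->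
  is_derive uu th du -> is_derive v1 th dv1 -> is_derive v2 th dv2 ->
  is_derive (fun t => 2 * sqrt (al t) * u1 t * u2 t
     + 2 * (exp (4 * uu t) / (4 * r ^ 2)) * sqrt (al t) * v1 t * v2 t) th
   (let sa := sqrt (al th) in let sat := dal / (2 * sa) in let e := exp (4 * uu th) in
    2*sat*u1 th*u2 th + 2*sa*d1*u2 th + 2*sa*u1 th*d2 + 2*(4*du*e/(4*r^2))*sa*v1 th*v2 th
     + 2*(e/(4*r^2))*(sat*v1 th*v2 th + sa*dv1*v2 th + sa*v1 th*dv2)).
Proof.
  intros Hal Hr H1 H2 H3 H4 H5 H6.
  assert (0 < sqrt (al th)) by (apply sqrt_lt_R0; lra).
  auto_derive.
  all: try (repeat split; try (eexists; eassumption); try lra; try nra; fail).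
  - replace (Derive (fun x => u1 x) th) with d1 by (symmetry; apply is_derive_unique; exact H1).
    replace (Derive (fun x => u2 x) th) with d2 by (symmetry; apply is_derive_unique; exact H2).
    replace (Derive (fun x => al x) th) with dal by (symmetry; apply is_derive_unique; exact H3).
    replace (Derive (fun x => uu x) th) with du by (symmetry; apply is_derive_unique; exact H4).
    replace (Derive (fun x => v1 x) th) with dv1 by (symmetry; apply is_derive_unique; exact H5).
    replace (Derive (fun x => v2 x) th) with dv2 by (symmetry; apply is_derive_unique; exact H6).
    simpl. field. lra.
Qed.

Lemma sm_dR R0 f : smooth_on R0 f -> forall l th r, R0 < r ->
  is_derive (fun s => pd l f th s) r (pR (pd l f) th r).
Proof. intros H l th r Hr. apply Derive_correct. apply (H l th r Hr). Qed.

Lemma sm_dth R0 f : smooth_on R0 f -> forall l th r, R0 < r ->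
  is_derive (fun t => pd l f t r) th (pth (pd l f) th r).
Proof. intros H l th r Hr. apply Derive_correct. apply (H l th r Hr). Qed.

Lemma T2_parts R0 K alpha nu U A G H : T2_vacuum R0 K alpha nu U A G H ->
  (smooth_on R0 alpha /\ periodic1 alpha) /\ (smooth_on R0 nu /\ periodic1 nu) /\
  (smooth_on R0 U /\ periodic1 U) /\ (smooth_on R0 A /\ periodic1 A).
Proof.
  intros [HS _].
  pose proof (HS alpha (or_introl eq_refl)).
  pose proof (HS nu (or_intror (or_introl eq_refl))).
  pose proof (HS U (or_intror (or_intror (or_introl eq_refl)))).
  pose proof (HS A (or_intror (or_intror (or_intror (or_introl eq_refl))))).
  tauto.
Qed.

Definition Dh (alpha U A : R -> R -> R) th r :=
  let sa := sqrt (alpha th r) in let saR := pR alpha th r / (2 * sa) in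
  let e := exp (4 * U th r) in
    2*pR U th r*pR (pR U) th r/sa - pR U th r^2*saR/sa^2 + saR*pth U th r^2
    + 2*sa*pth U th r*pR (pth U) th r
   + (4*pR U th r*e/(4*r^2) - e*(8*r)/(4*r^2)^2) * (pR A th r^2/sa + sa*pth A th r^2)
   + e/(4*r^2) * (2*pR A th r*pR (pR A) th r/sa - pR A th r^2*saR/sa^2
      + saR*pth A th r^2 + 2*sa*pth A th r*pR (pth A) th r).

Definition Fth (alpha U A : R -> R -> R) th r :=
  2 * sqrt (alpha th r) * pR U th r * pth U th r
     + 2 * (exp (4 * U th r) / (4 * r ^ 2)) * sqrt (alpha th r) * pR A th r * pth A th r.

Definition DF (alpha U A : R -> R -> R) th r :=
  let sa := sqrt (alpha th r) in let sat := pth alpha th r / (2 * sa) in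
  let e := exp (4 * U th r) in
    2*sat*pR U th r*pth U th r + 2*sa*pth (pR U) th r*pth U th r
    + 2*sa*pR U th r*pth (pth U) th r
    + 2*(4*pth U th r*e/(4*r^2))*sa*pR A th r*pth A th r
     + 2*(e/(4*r^2))*(sat*pR A th r*pth A th r + sa*pth (pR A) th r*pth A th r
        + sa*pR A th r*pth (pth A) th r).

Definition gg (K : R) (alpha nu U A : R -> R -> R) th r :=
  -(2/r)*(pR U th r^2/sqrt (alpha th r) + exp (4 * U th r)/(4*r^2)*sqrt (alpha th r)*pth A th r^2)
  - exp (2 * beta nu alpha th r) * K^2/(2*r^3) * hdens alpha U A th r.

Lemma Dh_deriv R0 alpha U A th r : smooth_on R0 alpha -> smooth_on R0 U -> smooth_on R0 A ->
  (forall th r, R0 < r -> 0 < alpha th r) -> 0 <= R0 -> R0 < r ->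
  is_derive (fun s => hdens alpha U A th s) r (Dh alpha U A th r).
Proof.
  intros Sa SU SA Hpos H0 Hr.
  apply (hd_is_derive (fun s => pR U th s) (fun s => pth U th s) (fun s => alpha th s)
     (fun s => U th s) (fun s => pR A th s) (fun s => pth A th s) r).
  - apply Hpos; lra.
  - lra.
  - exact (sm_dR _ _ SU (false::nil) th r Hr).
  - exact (sm_dR _ _ SU (true::nil) th r Hr).
  - exact (sm_dR _ _ Sa nil th r Hr).
  - exact (sm_dR _ _ SU nil th r Hr).
  - exact (sm_dR _ _ SA (false::nil) th r Hr).
  - exact (sm_dR _ _ SA (true::nil) th r Hr).
Qed.

Lemma F_deriv R0 alpha U A th r : smooth_on R0 alpha -> smooth_on R0 U -> smooth_on R0 A ->
  (forall th r, R0 < r -> 0 < alpha th r) -> 0 <= R0 -> R0 < r ->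
  is_derive (fun t => Fth alpha U A t r) th (DF alpha U A th r).
Proof.
  intros Sa SU SA Hpos H0 Hr.
  apply (F_is_derive (fun t => pR U t r) (fun t => pth U t r) (fun t => alpha t r)
     (fun t => U t r) (fun t => pR A t r) (fun t => pth A t r) r th).
  - apply Hpos; lra.
  - lra.
  - exact (sm_dth _ _ SU (false::nil) th r Hr).
  - exact (sm_dth _ _ SU (true::nil) th r Hr).
  - exact (sm_dth _ _ Sa nil th r Hr).
  - exact (sm_dth _ _ SU nil th r Hr).
  - exact (sm_dth _ _ SA (false::nil) th r Hr).
  - exact (sm_dth _ _ SA (true::nil) th r Hr).
Qed.

Lemma sm_schwarz R0 f th r : smooth_on R0 f -> R0 < r -> pth (pR f) th r = pR (pth f) th r.
Proof.
  intros S Hr.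
  apply (Schwarz f th r).
  - assert (Hd : 0 < r - R0) by lra.
    exists (mkposreal _ Hd). intros u v _ Hv. simpl in Hv.
    assert (Hv' : R0 < v) by (apply Rabs_def2 in Hv; lra).
    split; [|split; [|split]].
    + exact (proj1 (S nil u v Hv')).
    + exact (proj1 (proj2 (S nil u v Hv'))).
    + exact (proj1 (S (false::nil) u v Hv')).
    + exact (proj1 (proj2 (S (true::nil) u v Hv'))).
  - exact (sm_c2 _ _ S (true::false::nil) th r Hr).
  - exact (sm_c2 _ _ S (false::true::nil) th r Hr).
Qed.

Lemma Dh_split R0 K alpha nu U A G H th r : T2_vacuum R0 K alpha nu U A G H -> 0 <= R0 -> R0 < r ->
  Dh alpha U A th r = DF alpha U A th r + gg K alpha nu U A th r.
Proof.
  intros HT H0 Hr.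
  destruct (T2_parts _ _ _ _ _ _ _ _ HT) as [[Sa Pa] [[Sn Pn] [[SU PU] [SA PA]]]].
  destruct HT as [_ [Hpos [_ [_ [HalR [HUe [HAe _]]]]]]].
  specialize (Hpos th r Hr). specialize (HalR th r Hr). specialize (HUe th r Hr). specialize (HAe th r Hr).
  unfold Dh, DF, gg, hdens.
  rewrite <- (sm_schwarz _ _ th r SU Hr).
  rewrite <- (sm_schwarz _ _ th r SA Hr).
  assert (E1 : pR (pR U) th r = alpha th r * pth (pth U) th r + (- (pR U th r / r) + pR alpha th r * pR U th r / (2 * alpha th r)
       + pth alpha th r * pth U th r / 2
       + exp (4 * U th r) / (2 * r ^ 2) *
           ((pR A th r) ^ 2 - alpha th r * (pth A th r) ^ 2))) by lra.
  assert (E3 : pR (pR A) th r = alpha th r * pth (pth A) th r + (pR A th r / r + pR alpha th r * pR A th r / (2 * alpha th r)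
       + pth alpha th r * pth A th r / 2
       - 4 * pR A th r * pR U th r
       + 4 * alpha th r * pth A th r * pth U th r)) by lra.
  rewrite E1, E3. clear E1 E3 HUe HAe. rewrite HalR.
  assert (Hsa : 0 < sqrt (alpha th r)) by (apply sqrt_lt_R0; lra).
  assert (Hsq : alpha th r = sqrt (alpha th r) * sqrt (alpha th r)) by (symmetry; apply sqrt_sqrt; lra).
  set (sa := sqrt (alpha th r)) in *.
  rewrite Hsq. field. lra.
Qed.


Lemma c2_ln (f : R -> R -> R) x y :
  0 < f x y -> continuity_2d_pt f x y -> continuity_2d_pt (fun u v => ln (f u v)) x y.
Proof.
  intros Hp H. apply (continuity_1d_2d_pt_comp ln); auto.
  apply derivable_continuous_pt. exists (/ f x y). apply derivable_pt_lim_ln. exact Hp.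
Qed.

Lemma sm_leaves R0 f : smooth_on R0 f ->
  (forall th r, R0 < r -> continuity_2d_pt f th r) /\
  (forall th r, R0 < r -> continuity_2d_pt (pR f) th r) /\
  (forall th r, R0 < r -> continuity_2d_pt (pth f) th r) /\
  (forall th r, R0 < r -> continuity_2d_pt (pR (pR f)) th r) /\
  (forall th r, R0 < r -> continuity_2d_pt (pth (pth f)) th r) /\
  (forall th r, R0 < r -> continuity_2d_pt (pR (pth f)) th r) /\
  (forall th r, R0 < r -> continuity_2d_pt (pth (pR f)) th r).
Proof.
  intros S.
  split; [|split; [|split; [|split; [|split; [|split]]]]]; intros th r Hr.
  - exact (sm_c2 _ _ S nil th r Hr).
  - exact (sm_c2 _ _ S (false::nil) th r Hr).
  - exact (sm_c2 _ _ S (true::nil) th r Hr).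
  - exact (sm_c2 _ _ S (false::false::nil) th r Hr).
  - exact (sm_c2 _ _ S (true::true::nil) th r Hr).
  - exact (sm_c2 _ _ S (false::true::nil) th r Hr).
  - exact (sm_c2 _ _ S (true::false::nil) th r Hr).
Qed.

Ltac pos := repeat (first [apply Rmult_lt_0_compat | apply pow_lt | apply Rinv_0_lt_compat
   | apply Rdiv_lt_0_compat | apply sqrt_lt_R0 | apply exp_pos]); try lra; auto.

Ltac c2leaf := match goal with H : forall th r, ?R0 < r -> continuity_2d_pt _ th r |- _ => apply H; lra end.

Ltac c2 := repeat (first [ apply continuity_2d_pt_const | apply continuity_2d_pt_id2 | apply continuity_2d_pt_id1
   | c2leaf
   | apply continuity_2d_pt_plus | apply continuity_2d_pt_minus | apply continuity_2d_pt_mult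
   | apply continuity_2d_pt_opp | apply c2_pow | apply c2_exp | apply c2_sqrt | apply c2_ln
   | apply continuity_2d_pt_inv | (apply Rgt_not_eq; unfold Rgt; pos) | pos ]).

Ltac getleaves R0 K alpha nu U A G H HT :=
  let Sa := fresh in let Pa := fresh in let Sn := fresh in let Pn := fresh in
  let SU := fresh in let PU := fresh in let SA := fresh in let PA := fresh in
  destruct (T2_parts R0 K alpha nu U A G H HT) as [[Sa Pa] [[Sn Pn] [[SU PU] [SA PA]]]];
  destruct (sm_leaves _ _ Sa) as [? [? [? [? [? [? ?]]]]]];
  destruct (sm_leaves _ _ Sn) as [? [? [? [? [? [? ?]]]]]];
  destruct (sm_leaves _ _ SU) as [? [? [? [? [? [? ?]]]]]];
  destruct (sm_leaves _ _ SA) as [? [? [? [? [? [? ?]]]]]].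

Lemma cont_hd R0 K alpha nu U A G H th r : T2_vacuum R0 K alpha nu U A G H -> 0 <= R0 -> R0 < r ->
  continuity_2d_pt (hdens alpha U A) th r.
Proof.
  intros HT H0 Hr. getleaves R0 K alpha nu U A G H HT.
  assert (Hpos : forall th r, R0 < r -> 0 < alpha th r) by apply HT.
  assert (0 < alpha th r) by auto.
  unfold hdens, Rdiv. c2.
Qed.

Lemma cont_all R0 K alpha nu U A G H th r : T2_vacuum R0 K alpha nu U A G H -> 0 <= R0 -> R0 < r ->
  continuity_2d_pt (Dh alpha U A) th r /\ continuity_2d_pt (DF alpha U A) th r /\
  continuity_2d_pt (gg K alpha nu U A) th r /\ continuity_2d_pt (Fth alpha U A) th r.
Proof.
  intros HT H0 Hr.
  assert (Hh : forall th r, R0 < r -> continuity_2d_pt (hdens alpha U A) th r)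
    by (intros; eapply cont_hd; eauto).
  getleaves R0 K alpha nu U A G H HT.
  assert (Hpos : forall th r, R0 < r -> 0 < alpha th r) by apply HT.
  assert (0 < alpha th r) by auto.
  split; [|split; [|split]].
  - unfold Dh, Rdiv. c2.
  - unfold DF, Rdiv. c2.
  - unfold gg, beta, Rdiv. c2.
  - unfold Fth, Rdiv. c2.
Qed.


Lemma per_pR f x r : periodic1 f -> pR f (x + 1) r = pR f x r.
Proof. intros P. unfold pR. apply Derive_ext. intros t. apply P. Qed.

Lemma per_pth R0 f x r : smooth_on R0 f -> periodic1 f -> R0 < r -> pth f (x + 1) r = pth f x r.
Proof.
  intros S P Hr. unfold pth.
  rewrite <- (Derive_ext (fun t => f (t + 1) r) (fun t => f t r) x (fun t => P t r)).
  rewrite (Derive_comp (fun t => f t r) (fun t => t + 1) x).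
  - rewrite Derive_plus; [| auto_derive; auto | auto_derive; auto].
    rewrite Derive_id, Derive_const. ring.
  - exact (proj1 (S nil (x+1) r Hr)).
  - auto_derive; auto.
Qed.

Lemma Fth_per R0 K alpha nu U A G H r : T2_vacuum R0 K alpha nu U A G H -> R0 < r ->
  Fth alpha U A 1 r = Fth alpha U A 0 r.
Proof.
  intros HT Hr.
  destruct (T2_parts _ _ _ _ _ _ _ _ HT) as [[Sa Pa] [[Sn Pn] [[SU PU] [SA PA]]]].
  replace 1 with (0 + 1) by ring. unfold Fth.
  rewrite (Pa 0 r), (PU 0 r), (per_pR U 0 r PU), (per_pR A 0 r PA),
    (per_pth R0 U 0 r SU PU Hr), (per_pth R0 A 0 r SA PA Hr). reflexivity.
Qed.

Lemma loc1 R0 r (P : R -> Prop) : R0 < r -> (forall y, R0 < y -> P y) -> locally r P.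
Proof.
  intros Hr HP. assert (Hd : 0 < r - R0) by lra.
  exists (mkposreal _ Hd). intros y Hy. apply HP.
  change (Rabs (y - r) < r - R0) in Hy. apply Rabs_def2 in Hy. lra.
Qed.

Lemma loc2 R0 t r (P : R -> R -> Prop) : R0 < r -> (forall u v, R0 < v -> P u v) -> locally_2d P t r.
Proof.
  intros Hr HP. assert (Hd : 0 < r - R0) by lra.
  exists (mkposreal _ Hd). intros u v _ Hv. apply HP. simpl in Hv.
  apply Rabs_def2 in Hv. lra.
Qed.

Lemma E_deriv R0 K alpha nu U A G H r : T2_vacuum R0 K alpha nu U A G H -> 0 <= R0 -> R0 < r ->
  is_derive (energy alpha U A) r (RInt (fun th => gg K alpha nu U A th r) 0 1).
Proof.
  intros HT H0 Hr.
  destruct (T2_parts _ _ _ _ _ _ _ _ HT) as [[Sa Pa] [[Sn Pn] [[SU PU] [SA PA]]]].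
  assert (Hpos : forall th r, R0 < r -> 0 < alpha th r) by apply HT.
  assert (HD := is_derive_RInt_param (fun u t => hdens alpha U A t u) 0 1 r).
  assert (HDh : forall th s, R0 < s -> is_derive (fun z => hdens alpha U A th z) s (Dh alpha U A th s))
    by (intros; eapply Dh_deriv; eauto).
  unfold energy.
  replace (RInt (fun th => gg K alpha nu U A th r) 0 1)
    with (RInt (fun t => Derive (fun u => hdens alpha U A t u) r) 0 1).
  - apply HD.
    + apply (loc1 R0); auto. intros y Hy t _. eexists. apply HDh; auto.
    + intros t _. apply c2_swap.
      apply (continuity_2d_pt_ext_loc (Dh alpha U A)).
      * apply (loc2 R0); auto. intros u v Hv. symmetry. apply is_derive_unique. apply HDh; auto.
      * eapply cont_all; eauto.
    + apply (loc1 R0); auto. intros y Hy. apply (ex_RInt_continuous (V:=R_CompleteNormedModule)). intros z _.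
      apply c2_1d_fst. eapply cont_hd; eauto.
  - assert (Hc := fun th => cont_all R0 K alpha nu U A G H th r HT H0 Hr).
    rewrite (RInt_ext _ (fun t => plus (DF alpha U A t r) (gg K alpha nu U A t r))).
    2:{ intros x _. transitivity (Dh alpha U A x r).
        { apply is_derive_unique. apply HDh. auto. }
        eapply Dh_split; eauto. }
    rewrite (RInt_plus (V:=R_CompleteNormedModule)).
    2:{ apply (ex_RInt_continuous (V:=R_CompleteNormedModule)). intros z _. apply c2_1d_fst. apply Hc. }
    2:{ apply (ex_RInt_continuous (V:=R_CompleteNormedModule)). intros z _. apply c2_1d_fst. apply Hc. }
    rewrite (is_RInt_unique (fun t => DF alpha U A t r) 0 1 (minus (Fth alpha U A 1 r) (Fth alpha U A 0 r))).
    + rewrite (Fth_per R0 K alpha nu U A G H r HT Hr).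
      rewrite minus_eq_zero. rewrite plus_zero_l. reflexivity.
    + apply (is_RInt_derive (fun t => Fth alpha U A t r)).
      * intros x _. eapply F_deriv; eauto.
      * intros x _. apply c2_1d_fst. apply Hc.
Qed.


Lemma sq_div_nonneg x s : 0 < s -> 0 <= x ^ 2 / s.
Proof. intros Hs. apply Rdiv_le_0_compat; [nra | lra]. Qed.

Lemma hd_nonneg (alpha U A : R -> R -> R) th r : 0 < alpha th r -> 0 < r -> 0 <= hdens alpha U A th r.
Proof.
  intros Ha Hr. unfold hdens.
  assert (Hs : 0 < sqrt (alpha th r)) by (apply sqrt_lt_R0; lra).
  assert (He : 0 < exp (4 * U th r) / (4 * r ^ 2)) by (apply Rdiv_lt_0_compat; [apply exp_pos | nra]).
  pose proof (sq_div_nonneg (pR U th r) _ Hs).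
  pose proof (sq_div_nonneg (pR A th r) _ Hs).
  assert (0 <= sqrt (alpha th r) * pth U th r ^ 2) by nra.
  assert (0 <= sqrt (alpha th r) * pth A th r ^ 2) by nra.
  nra.
Qed.

Lemma gg_bounds K (alpha nu U A : R -> R -> R) th r m M : 0 < alpha th r -> 0 < r ->
  m <= exp (2 * beta nu alpha th r) <= M ->
  - (2 / r + K^2 * M / (2 * r^3)) * hdens alpha U A th r <= gg K alpha nu U A th r <=
  - (K^2 * m / (2 * r^3)) * hdens alpha U A th r.
Proof.
  intros Ha Hr [Hm HM]. unfold gg.
  assert (Hh := hd_nonneg alpha U A th r Ha Hr).
  set (X := pR U th r ^ 2 / sqrt (alpha th r) + exp (4 * U th r) / (4 * r ^ 2) * sqrt (alpha th r) * pth A th r ^ 2).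
  assert (Hs : 0 < sqrt (alpha th r)) by (apply sqrt_lt_R0; lra).
  assert (He : 0 < exp (4 * U th r) / (4 * r ^ 2)) by (apply Rdiv_lt_0_compat; [apply exp_pos | nra]).
  assert (HX0 : 0 <= X).
  { unfold X. pose proof (sq_div_nonneg (pR U th r) _ Hs).
    assert (0 <= sqrt (alpha th r) * pth A th r ^ 2) by nra. nra. }
  assert (HXh : X <= hdens alpha U A th r).
  { pose proof (sq_div_nonneg (pR A th r) _ Hs).
    assert (0 <= sqrt (alpha th r) * pth U th r ^ 2) by nra.
    assert (0 <= exp (4 * U th r) / (4 * r ^ 2) * (pR A th r ^ 2 / sqrt (alpha th r))) by (apply Rmult_le_pos; lra).
    replace (hdens alpha U A th r) with (X + (sqrt (alpha th r) * pth U th r ^ 2 +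
       exp (4 * U th r) / (4 * r ^ 2) * (pR A th r ^ 2 / sqrt (alpha th r)))) by (unfold X, hdens; ring).
    lra. }
  set (e := exp (2 * beta nu alpha th r)) in *.
  assert (Hk : 0 <= K ^ 2 / (2 * r ^ 3)) by (apply Rdiv_le_0_compat; [nra | apply Rmult_lt_0_compat; [lra | apply pow_lt; lra]]).
  assert (H2r : 0 < 2 / r) by (apply Rdiv_lt_0_compat; lra).
  replace (e * K ^ 2 / (2 * r ^ 3) * hdens alpha U A th r) with (K ^ 2 / (2 * r ^ 3) * e * hdens alpha U A th r)
    by (field; lra).
  replace (K ^ 2 * M / (2 * r ^ 3)) with (K ^ 2 / (2 * r ^ 3) * M) by (field; lra).
  replace (K ^ 2 * m / (2 * r ^ 3)) with (K ^ 2 / (2 * r ^ 3) * m) by (field; lra).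
  set (k := K ^ 2 / (2 * r ^ 3)) in *.
  set (h := hdens alpha U A th r) in *.
  assert (k * e * h <= k * M * h).
  { apply Rmult_le_compat_r; auto. apply Rmult_le_compat_l; auto. }
  assert (k * m * h <= k * e * h).
  { apply Rmult_le_compat_r; auto. apply Rmult_le_compat_l; auto. }
  assert (2 / r * X <= 2 / r * h) by (apply Rmult_le_compat_l; lra).
  assert (0 <= 2 / r * X) by (apply Rmult_le_pos; lra).
  split; nra.
Qed.


Lemma RInt_scal_R (f : R -> R) a b k : ex_RInt f a b -> RInt (fun x => k * f x) a b = k * RInt f a b.
Proof. intros H. exact (RInt_scal (V:=R_CompleteNormedModule) f a b k H). Qed.

Lemma ex_RInt_c2 (f : R -> R -> R) a b r : (forall t, Rmin a b <= t <= Rmax a b -> continuity_2d_pt f t r) ->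
  ex_RInt (fun t => f t r) a b.
Proof.
  intros H. apply (ex_RInt_continuous (V:=R_CompleteNormedModule)). intros z Hz. apply c2_1d_fst. auto.
Qed.

Lemma pthb_bound (alpha U A : R -> R -> R) th r p : 0 < alpha th r -> 0 < r ->
  p = 2 * r * (pR U th r * pth U th r
                 + exp (4 * U th r) / (4 * r ^ 2) * pR A th r * pth A th r) ->
  - (r * hdens alpha U A th r) <= p <= r * hdens alpha U A th r.
Proof.
  intros Ha Hr ->. unfold hdens.
  assert (Hs : 0 < sqrt (alpha th r)) by (apply sqrt_lt_R0; lra).
  assert (He : 0 < exp (4 * U th r) / (4 * r ^ 2)) by (apply Rdiv_lt_0_compat; [apply exp_pos | nra]).
  set (s := sqrt (alpha th r)) in *. set (c := exp (4 * U th r) / (4 * r ^ 2)) in *.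
  set (a1 := pR U th r). set (b1 := pth U th r). set (a2 := pR A th r). set (b2 := pth A th r).
  pose proof (sq_div_nonneg (a1 - s * b1) s Hs).
  pose proof (sq_div_nonneg (a1 + s * b1) s Hs).
  pose proof (sq_div_nonneg (a2 - s * b2) s Hs).
  pose proof (sq_div_nonneg (a2 + s * b2) s Hs).
  assert (E1 : r * (a1 ^ 2 / s + s * b1 ^ 2 + c * (a2 ^ 2 / s + s * b2 ^ 2)) - 2 * r * (a1 * b1 + c * a2 * b2)
     = r * ((a1 - s * b1) ^ 2 / s + c * ((a2 - s * b2) ^ 2 / s))) by (field; lra).
  assert (E2 : r * (a1 ^ 2 / s + s * b1 ^ 2 + c * (a2 ^ 2 / s + s * b2 ^ 2)) + 2 * r * (a1 * b1 + c * a2 * b2)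
     = r * ((a1 + s * b1) ^ 2 / s + c * ((a2 + s * b2) ^ 2 / s))) by (field; lra).
  assert (0 <= r * ((a1 - s * b1) ^ 2 / s + c * ((a2 - s * b2) ^ 2 / s))).
  { apply Rmult_le_pos; [lra|]. assert (0 <= c * ((a2 - s * b2) ^ 2 / s)) by (apply Rmult_le_pos; lra). lra. }
  assert (0 <= r * ((a1 + s * b1) ^ 2 / s + c * ((a2 + s * b2) ^ 2 / s))).
  { apply Rmult_le_pos; [lra|]. assert (0 <= c * ((a2 + s * b2) ^ 2 / s)) by (apply Rmult_le_pos; lra). lra. }
  split; lra.
Qed.

Lemma E_nonneg R0 K alpha nu U A G H r : T2_vacuum R0 K alpha nu U A G H -> 0 <= R0 -> R0 < r ->
  0 <= energy alpha U A r.
Proof.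
  intros HT H0 Hr. unfold energy.
  assert (Hpos : forall th r, R0 < r -> 0 < alpha th r) by apply HT.
  apply RInt_ge_0; [lra| |].
  - apply ex_RInt_c2. intros t _. eapply cont_hd; eauto.
  - intros x _. apply hd_nonneg; auto; lra.
Qed.

Lemma beta_bound R0 K alpha nu U A G H th r : T2_vacuum R0 K alpha nu U A G H -> 0 <= R0 -> R0 < r ->
  0 <= th <= 1 ->
  beta nu alpha 0 r - r * energy alpha U A r <= beta nu alpha th r <= beta nu alpha 0 r + r * energy alpha U A r.
Proof.
  intros HT H0 Hr Hth.
  assert (Hh : forall th r, R0 < r -> continuity_2d_pt (hdens alpha U A) th r)
    by (intros; eapply cont_hd; eauto).
  assert (Hpos : forall th r, R0 < r -> 0 < alpha th r) by apply HT.
  assert (Hb : forall th r, R0 < r ->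
     pth (beta nu alpha) th r = 2 * r * (pR U th r * pth U th r
                 + exp (4 * U th r) / (4 * r ^ 2) * pR A th r * pth A th r)) by apply HT.
  destruct (T2_parts _ _ _ _ _ _ _ _ HT) as [[Sa0 _] [[Sn0 _] _]].
  getleaves R0 K alpha nu U A G H HT.
  set (P := fun u v => 2 * v * (pR U u v * pth U u v
                 + exp (4 * U u v) / (4 * v ^ 2) * pR A u v * pth A u v)).
  assert (HP : forall t, continuity_2d_pt P t r).
  { intros t. assert (0 < alpha t r) by auto. unfold P, Rdiv. c2. }
  assert (HI : RInt (Derive (fun t => beta nu alpha t r)) 0 th = beta nu alpha th r - beta nu alpha 0 r).
  { apply (RInt_Derive (fun t => beta nu alpha t r)).
    - intros x _. assert (0 < alpha x r) by auto. unfold beta. auto_derive. repeat split; auto.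
      + exact (proj1 (Sn0 nil x r Hr)).
      + exact (proj1 (Sa0 nil x r Hr)).
    - intros x _. apply (continuous_ext (fun t => P t r)).
      + intros t. unfold P. symmetry. apply (Hb t r Hr).
      + apply c2_1d_fst. apply HP. }
  assert (HexP : ex_RInt (fun t => P t r) 0 th) by (apply ex_RInt_c2; auto).
  assert (Hexh : ex_RInt (fun t => hdens alpha U A t r) 0 th) by (apply ex_RInt_c2; auto).
  assert (Hexh1 : ex_RInt (fun t => hdens alpha U A t r) th 1) by (apply ex_RInt_c2; auto).
  assert (HIP : RInt (Derive (fun t => beta nu alpha t r)) 0 th = RInt (fun t => P t r) 0 th).
  { apply RInt_ext. intros x _. apply (Hb x r Hr). }
  assert (Hbd : forall t, - (r * hdens alpha U A t r) <= P t r <= r * hdens alpha U A t r).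
  { intros t. apply pthb_bound; auto; lra. }
  assert (Hup : RInt (fun t => P t r) 0 th <= r * RInt (fun t => hdens alpha U A t r) 0 th).
  { rewrite <- RInt_scal_R by exact Hexh.
    apply (RInt_le (fun t => P t r) (fun t => r * hdens alpha U A t r) 0 th).
    - lra.
    - exact HexP.
    - apply (ex_RInt_scal (V:=R_CompleteNormedModule) _ _ _ r Hexh).
    - intros x _. apply Hbd. }
  assert (Hlo : - (r * RInt (fun t => hdens alpha U A t r) 0 th) <= RInt (fun t => P t r) 0 th).
  { assert (Heq : RInt (fun t => (- r) * hdens alpha U A t r) 0 th = - (r * RInt (fun t => hdens alpha U A t r) 0 th)).
    { rewrite RInt_scal_R by exact Hexh. symmetry. apply Ropp_mult_distr_l. }
    rewrite <- Heq.
    apply (RInt_le (fun t => (- r) * hdens alpha U A t r) (fun t => P t r) 0 th).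
    - lra.
    - apply (ex_RInt_scal (V:=R_CompleteNormedModule) _ _ _ (- r) Hexh).
    - exact HexP.
    - intros x _. pose proof (Hbd x). lra. }
  assert (HE : RInt (fun t => hdens alpha U A t r) 0 th <= energy alpha U A r).
  { unfold energy. rewrite <- (RInt_Chasles (V:=R_CompleteNormedModule) _ 0 th 1 Hexh Hexh1).
    assert (0 <= RInt (fun t => hdens alpha U A t r) th 1).
    { apply RInt_ge_0; [lra | auto |]. intros x _. apply hd_nonneg; auto; lra. }
    change (plus ?a ?b) with (a + b). lra. }
  assert (r * RInt (fun t => hdens alpha U A t r) 0 th <= r * energy alpha U A r)
    by (apply Rmult_le_compat_l; lra).
  lra.
Qed.


Lemma exp_le' x y : x <= y -> exp x <= exp y.
Proof. intros [H|H]. - left. apply exp_increasing. exact H. - subst. lra. Qed.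

Lemma Ed_bounds R0 K alpha nu U A G H r : T2_vacuum R0 K alpha nu U A G H -> 0 <= R0 -> R0 < r ->
  let E := energy alpha U A r in let b0 := beta nu alpha 0 r in
  - (2 / r + K^2 * exp (2 * (b0 + r * E)) / (2 * r^3)) * E <= RInt (fun th => gg K alpha nu U A th r) 0 1 <=
  - (K^2 * exp (2 * (b0 - r * E)) / (2 * r^3)) * E.
Proof.
  intros HT H0 Hr E b0.
  assert (Hpos : forall th r, R0 < r -> 0 < alpha th r) by apply HT.
  assert (Hc := fun th => cont_all R0 K alpha nu U A G H th r HT H0 Hr).
  assert (Hh : forall th r, R0 < r -> continuity_2d_pt (hdens alpha U A) th r)
    by (intros; eapply cont_hd; eauto).
  assert (Hexh : ex_RInt (fun t => hdens alpha U A t r) 0 1) by (apply ex_RInt_c2; auto).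
  assert (Hexg : ex_RInt (fun t => gg K alpha nu U A t r) 0 1) by (apply ex_RInt_c2; intros; apply Hc).
  assert (Hpt : forall th, 0 < th < 1 ->
     - (2 / r + K^2 * exp (2 * (b0 + r * E)) / (2 * r^3)) * hdens alpha U A th r <= gg K alpha nu U A th r <=
     - (K^2 * exp (2 * (b0 - r * E)) / (2 * r^3)) * hdens alpha U A th r).
  { intros th Hth. apply gg_bounds; auto; try lra.
    destruct (beta_bound R0 K alpha nu U A G H th r HT H0 Hr) as [B1 B2]; [lra|].
    split; apply exp_le'; unfold b0, E; lra. }
  split.
  - unfold E, energy. rewrite <- RInt_scal_R by exact Hexh.
    apply RInt_le; [lra | apply (ex_RInt_scal (V:=R_CompleteNormedModule)); exact Hexh | exact Hexg |].
    intros x Hx. apply Hpt; auto.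
  - unfold E, energy. rewrite <- RInt_scal_R by exact Hexh.
    apply RInt_le; [lra | exact Hexg | apply (ex_RInt_scal (V:=R_CompleteNormedModule)); exact Hexh |].
    intros x Hx. apply Hpt; auto.
Qed.

Lemma strict_decr (f df : R -> R) a b : a < b ->
  (forall x, a <= x <= b -> is_derive f x (df x)) ->
  (forall x, a <= x <= b -> df x < 0) -> f b < f a.
Proof.
  intros Hab Hd Hn.
  assert (H := incr_function_le (fun x => - f x) (Finite a) (Finite b) (fun x => - df x)).
  simpl in H. 
  enough (- f a < - f b) by lra.
  apply H; try lra.
  - intros x H1 H2. exact (is_derive_opp f x (df x) (Hd x (conj H1 H2))).
  - intros x H1 H2. specialize (Hn x (conj H1 H2)). lra.
Qed.
Lemma mono_le (f df : R -> R) a b : a <= b ->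
  (forall x, a <= x <= b -> is_derive f x (df x)) ->
  (forall x, a <= x <= b -> 0 <= df x) -> f a <= f b.
Proof.
  intros Hab Hd Hn.
  destruct (Req_dec a b) as [->|Hne]; [lra|].
  destruct (Rle_or_lt (f a) (f b)) as [|Hlt]; auto.
  set (eps := (f a - f b) / (2 * (b - a))).
  assert (Heps : 0 < eps). { unfold eps. apply Rdiv_lt_0_compat; lra. }
  assert (H := incr_function_le (fun x => f x + eps * x) (Finite a) (Finite b) (fun x => df x + eps)).
  simpl in H.
  assert (Hg : f a + eps * a < f b + eps * b).
  { apply H; try lra.
    - intros x H1 H2. refine (is_derive_plus f (fun x => eps * x) x (df x) eps (Hd x (conj H1 H2)) _).
      assert (Hs := is_derive_scal (fun x => x) x eps 1 (is_derive_id x)).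
      simpl in Hs. rewrite Rmult_1_r in Hs. exact Hs.
    - intros x H1 H2. specialize (Hn x (conj H1 H2)). lra. }
  assert (eps * (b - a) = (f a - f b) / 2). { unfold eps. field. lra. }
  nra.
Qed.

Lemma coef_le K x y s r : 0 < r -> r <= s -> 0 < x -> x <= y ->
  K ^ 2 * x / (2 * s ^ 3) <= K ^ 2 * y / (2 * r ^ 3).
Proof.
  intros Hr Hrs Hx Hxy.
  assert (0 < r ^ 3) by (apply pow_lt; lra).
  assert (r ^ 3 <= s ^ 3) by (apply pow_incr; lra).
  unfold Rdiv. apply Rmult_le_compat.
  - assert (0 <= K ^ 2) by (apply pow2_ge_0). apply Rmult_le_pos; lra.
  - left. apply Rinv_0_lt_compat. lra.
  - apply Rmult_le_compat_l; [apply pow2_ge_0 | lra].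
  - apply Rinv_le_contravar; lra.
Qed.

Theorem lemma1 (R0 K Ri : R) (alpha nu U A G H : R -> R -> R) :
  0 <= R0 -> 0 <= K ->
  T2_vacuum R0 K alpha nu U A G H ->
  R0 < Ri ->
  (energy alpha U A Ri = 0 ->
     forall r, R0 < r -> energy alpha U A r = 0) /\
  (energy alpha U A Ri <> 0 ->
     forall r1 r2, R0 < r1 -> r1 <= r2 ->
       energy alpha U A r2 <= energy alpha U A r1) /\
  (energy alpha U A Ri <> 0 -> K <> 0 ->
     forall r1 r2, R0 < r1 -> r1 < r2 ->
       energy alpha U A r2 < energy alpha U A r1).
Proof.
  intros H0 HK HT Hi.
  set (E := energy alpha U A).
  set (D := fun r => RInt (fun th => gg K alpha nu U A th r) 0 1).
  assert (Eder : forall r, R0 < r -> is_derive E r (D r)) by (intros; eapply E_deriv; eauto).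
  assert (Enn : forall r, R0 < r -> 0 <= E r) by (intros; eapply E_nonneg; eauto).
  assert (Dup : forall r, R0 < r -> D r <= - (K^2 * exp (2 * (beta nu alpha 0 r - r * E r)) / (2 * r^3)) * E r)
    by (intros r Hr; apply (Ed_bounds R0 K alpha nu U A G H r HT H0 Hr)).
  assert (Dlo : forall r, R0 < r -> - (2 / r + K^2 * exp (2 * (beta nu alpha 0 r + r * E r)) / (2 * r^3)) * E r <= D r)
    by (intros r Hr; apply (Ed_bounds R0 K alpha nu U A G H r HT H0 Hr)).
  assert (Dneg : forall r, R0 < r -> D r <= 0).
  { intros r Hr. specialize (Dup r Hr). specialize (Enn r Hr).
    assert (0 <= K ^ 2 * exp (2 * (beta nu alpha 0 r - r * E r)) / (2 * r ^ 3)).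
    { apply Rdiv_le_0_compat. apply Rmult_le_pos; [apply pow2_ge_0 | left; apply exp_pos].
      apply Rmult_lt_0_compat; [lra | apply pow_lt; lra]. }
    nra. }
  assert (Part2 : forall r1 r2, R0 < r1 -> r1 <= r2 -> E r2 <= E r1).
  { intros r1 r2 Hr1 H12.
    enough (- E r1 <= - E r2) by lra.
    apply (mono_le (fun s => - E s) (fun s => - D s) r1 r2 H12).
    - intros x Hx. exact (is_derive_opp E x (D x) (Eder x ltac:(lra))).
    - intros x Hx. specialize (Dneg x ltac:(lra)). lra. }
  assert (Part1 : forall R1, R0 < R1 -> E R1 = 0 -> forall r, R0 < r -> E r = 0).
  { intros R1 HR1 HE r Hr.
    destruct (Rle_or_lt R1 r) as [Hle|Hlt].
    - specialize (Part2 R1 r HR1 Hle). specialize (Enn r Hr). lra.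
    - destruct (continuity_ab_maj (fun s => beta nu alpha 0 s) r R1) as [Mx [HMx HMxI]]; [lra| |].
      { intros c Hc. apply (continuity_pt_filterlim (fun s => beta nu alpha 0 s) c). apply (c2_1d_snd (beta nu alpha) 0 c).
        assert (Hpos : forall th r, R0 < r -> 0 < alpha th r) by apply HT.
        getleaves R0 K alpha nu U A G H HT.
        assert (0 < alpha 0 c) by (apply Hpos; lra).
        unfold beta. c2. }
      set (bm := beta nu alpha 0 Mx) in *.
      set (C := 2 / r + K ^ 2 * exp (2 * (bm + R1 * E r)) / (2 * r ^ 3)).
      assert (Hphi : E r * exp (C * r) <= E R1 * exp (C * R1)).
      { apply (mono_le (fun s => E s * exp (C * s)) (fun s => D s * exp (C * s) + E s * (C * exp (C * s))) r R1); [lra| |].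
        - intros x Hx. assert (Hd := Eder x ltac:(lra)).
          auto_derive.
          + exists (D x). exact Hd.
          + replace (Derive (fun x0 => E x0) x) with (D x) by (symmetry; apply is_derive_unique; exact Hd). ring.
        - intros x Hx.
          assert (Hx0 : R0 < x) by lra.
          specialize (Dlo x Hx0). specialize (Enn x Hx0).
          assert (HEx : E x <= E r) by (apply Part2; lra).
          assert (Hc : 2 / x + K ^ 2 * exp (2 * (beta nu alpha 0 x + x * E x)) / (2 * x ^ 3) <= C).
          { unfold C. apply Rplus_le_compat.
            - unfold Rdiv. apply Rmult_le_compat_l; [lra|]. apply Rinv_le_contravar; lra.
            - apply coef_le; try lra. apply exp_pos. apply exp_le'.
              assert (beta nu alpha 0 x <= bm) by (apply HMx; lra).
              assert (x * E x <= R1 * E r).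
              { apply Rmult_le_compat; lra. }
              lra. }
          assert (0 < exp (C * x)) by apply exp_pos.
          assert (D x + C * E x >= 0) by nra.
          nra. }
      rewrite HE in Hphi. assert (0 < exp (C * r)) by apply exp_pos.
      specialize (Enn r Hr). nra. }
  split; [|split].
  - intros HE r Hr. exact (Part1 Ri Hi HE r Hr).
  - intros _ r1 r2 Hr1 H12. apply Part2; auto.
  - intros HE HK0 r1 r2 Hr1 H12.
    apply (strict_decr E D r1 r2 H12).
    + intros x Hx. apply Eder. lra.
    + intros x Hx. assert (Hx0 : R0 < x) by lra.
      assert (HEp : 0 < E x).
      { destruct (Enn x Hx0) as [|Hz]; auto. exfalso. apply HE. symmetry in Hz.
        exact (Part1 x Hx0 Hz Ri Hi). }
      specialize (Dup x Hx0).
      assert (0 < K ^ 2 * exp (2 * (beta nu alpha 0 x - x * E x)) / (2 * x ^ 3)).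
      { apply Rdiv_lt_0_compat. apply Rmult_lt_0_compat; [apply pow_lt; lra | apply exp_pos].
        apply Rmult_lt_0_compat; [lra | apply pow_lt; lra]. }
      nra.
Qed.
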